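(* In the algebra $\mathcal{A}$ described in the context, let \[\tilde A^{\mathrm{bi}}_{s;mn}(W)=\{(E_n-s^2Q_n^2)(Q_m^2E_m-1)-(E_m-s^2Q_m^2)(Q_n^2E_n-1)\}Q_mQ_n\] and \[A^{\mathrm{bi};2}_{s;mn}(W)=\{u_1(s,E_n,Q_n)(E_n-s^2Q_n^2)v_1(s,E_m,Q_m)(Q_m^2E_m-1)-u_1(s,E_m,Q_m)(E_m-s^2Q_m^2)v_1(s,E_n,Q_n)(Q_n^2E_n-1)\}Q_mQ_n.\] Then $\tilde A^{\mathrm{bi}}_{s;mn}(W)$ is a right divisor of $A^{\mathrm{bi};2}_{s;mn}(W)$, i.e. $A^{\mathrm{bi};2}_{s;mn}(W)=C\,\tilde A^{\mathrm{bi}}_{s;mn}(W)$ for some $C\in\mathcal{A}$.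
   Context: $s$ is an indeterminate. $\mathcal{A}$ is the algebra of noncommutative polynomials in $E_m,E_n$ with coefficients in $\mathbb{Q}(s,Q_m,Q_n)$ written on the left, subject to $E_mE_n=E_nE_m$, $E_m\,p(s,Q_m,Q_n)=p(s,sQ_m,Q_n)E_m$, $E_n\,p(s,Q_m,Q_n)=p(s,Q_m,sQ_n)E_n$ for rational functions $p$. For $(E,Q)\in\{(E_m,Q_m),(E_n,Q_n)\}$ put $\Phi_k(Q)=1-s^kQ^4$ and $u_1(s,E,Q)=\frac{1}{\Phi_6(Q)}E-\frac{s^2Q^2}{\Phi_2(Q)}$, $v_1(s,E,Q)=\frac{s^2Q^2}{\Phi_6(Q)}E-\frac{1}{\Phi_2(Q)}$. *)

(* Defs.v *)
From HB Require Import structures.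
From mathcomp Require Import all_boot all_order all_algebra.
From mathcomp Require Import generic_quotient fraction.
Set Implicit Arguments. Unset Strict Implicit. Unset Printing Implicit Defensive.
Import GRing.Theory.
Local Open Scope ring_scope.

(* Polynomial ring Q[s][Q_m][Q_n]: innermost variable s, middle Q_m, outer Q_n. *)
Definition Pring := {poly {poly {poly rat}}}.
Definition Kf := {fraction Pring}.
Notation tofracP := (@FracField.tofrac Pring).
Local Notation "x %:F" := (tofracP x).

Definition sP : Pring := ('X%:P)%:P.
Definition QmP : Pring := ('X : {poly {poly rat}})%:P.
Definition QnP : Pring := 'X.

(* p(s,Qm,Qn) |-> p(s, s Qm, Qn) on the polynomial ring *)
Definition sigmP_m (p : Pring) : Pring :=
  map_poly (fun q : {poly {poly rat}} => q \Po (('X : {poly rat})%:P * 'X)) p.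
(* p(s,Qm,Qn) |-> p(s, Qm, s Qn) on the polynomial ring *)
Definition sigmP_n (p : Pring) : Pring :=
  p \Po ((('X : {poly rat})%:P : {poly {poly rat}})%:P * 'X).

Definition lift_frac (f : Pring -> Pring) (x : Kf) : Kf :=
  let r := repr x in (f (frac r).1)%:F / (f (frac r).2)%:F.

Definition sigma_m : Kf -> Kf := lift_frac sigmP_m.
Definition sigma_n : Kf -> Kf := lift_frac sigmP_n.

Definition s_ : Kf := sP%:F.
Definition Qm : Kf := QmP%:F.
Definition Qn : Kf := QnP%:F.

(* The algebra A: elements are represented as commutative polynomials in
   E_n (outer variable) and E_m (inner variable) with coefficients in Kf
   written on the left: p = \sum_(i,j) p_ij E_m^j E_n^i.
   The product is the skew product determined by
   E_m a = sigma_m(a) E_m, E_n a = sigma_n(a) E_n, E_m E_n = E_n E_m. *)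
Definition Alg := {poly {poly Kf}}.

Definition shift (j i : nat) (a : Kf) : Kf := iter j sigma_m (iter i sigma_n a).

Definition amul (p q : Alg) : Alg :=
  \sum_(i < size p) \sum_(j < size p`_i)
     ((p`_i`_j)%:P%:P * map_poly (map_poly (shift j i)) q
        * ('X^j)%:P * 'X^i).

Definition Em : Alg := ('X)%:P.
Definition En : Alg := 'X.
Definition cst (a : Kf) : Alg := a%:P%:P.

Definition Phi (k : nat) (Q : Kf) : Kf := 1 - s_ ^+ k * Q ^+ 4.

Definition u1 (E : Alg) (Q : Kf) : Alg :=
  amul (cst (Phi 6 Q)^-1) E - cst (s_ ^+ 2 * Q ^+ 2 / Phi 2 Q).
Definition v1 (E : Alg) (Q : Kf) : Alg :=
  amul (cst (s_ ^+ 2 * Q ^+ 2 / Phi 6 Q)) E - cst (Phi 2 Q)^-1.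

Definition Atilde : Alg :=
  amul (amul (amul (En - cst (s_ ^+ 2 * Qn ^+ 2))
                   (amul (cst (Qm ^+ 2)) Em - 1)
            - amul (Em - cst (s_ ^+ 2 * Qm ^+ 2))
                   (amul (cst (Qn ^+ 2)) En - 1))
        (cst Qm)) (cst Qn).

Definition A2 : Alg :=
  amul (amul (
      amul (amul (amul (u1 En Qn) (En - cst (s_ ^+ 2 * Qn ^+ 2))) (v1 Em Qm))
           (amul (cst (Qm ^+ 2)) Em - 1)
    - amul (amul (amul (u1 Em Qm) (Em - cst (s_ ^+ 2 * Qm ^+ 2))) (v1 En Qn))
           (amul (cst (Qn ^+ 2)) En - 1))
    (cst Qm)) (cst Qn).

(* Main.v *)
Require Import Defs.
From HB Require Import structures.
From mathcomp Require Import all_boot all_order all_algebra.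
From mathcomp Require Import generic_quotient fraction.
From mathcomp Require Import ring.
Set Implicit Arguments. Unset Strict Implicit. Unset Printing Implicit Defensive.
Import GRing.Theory.
Local Open Scope ring_scope.
Local Notation "x %:F" := (tofracP x).

Lemma frac_pi (r : {ratio Pring}) : ((\pi_(Kf) r)%qT : Kf) * (\d_r)%:F = (\n_r)%:F.
Proof.
unlock FracField.tofrac.
rewrite !piE. apply/eqmodP => /=. rewrite FracField.equivfE /=.
rewrite !numden_Ratio ?mulf_neq0 ?oner_neq0 //.
- by rewrite !mulr1 [X in _ == X]mulrC.
all: exact: denom_ratioP.
Qed.

Lemma frac_repr (x : Kf) : x * (\d_(repr x))%:F = (\n_(repr x))%:F.
Proof. by have := frac_pi (repr x); rewrite reprK. Qed.

Lemma tofrac_neq0 (p : Pring) : p != 0 -> p%:F != 0.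
Proof. by rewrite tofrac_eq0. Qed.

Lemma frac_repr2 (x : Kf) : x = (\n_(repr x))%:F / (\d_(repr x))%:F.
Proof.
rewrite -frac_repr mulfK //; apply: tofrac_neq0; exact: denom_ratioP.
Qed.

Section Lift.
Variable f : {rmorphism Pring -> Pring}.
Hypothesis finj : injective f.

Lemma f_neq0 p : p != 0 -> f p != 0.
Proof. by move=> p0; rewrite -(rmorph0 f) (inj_eq finj). Qed.

Lemma lift_fracE a b : b != 0 ->
  lift_frac f (a%:F / b%:F) = (f a)%:F / (f b)%:F.
Proof.
move=> b0; rewrite /lift_frac.
set x := a%:F / b%:F.
have H := frac_repr x.
have d0 := denom_ratioP (repr x).
move: H; set n := (frac (repr x)).1; set d := (frac (repr x)).2 => H.
have E : a * d = n * b.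
  apply/eqP; rewrite -tofrac_eq !tofracM -H /x.
  by rewrite mulrAC divfK //; apply: tofrac_neq0.
apply/eqP; rewrite eqr_div ?tofrac_neq0 ?f_neq0 //.
by rewrite -!tofracM -!(rmorphM f) E mulrC.
Qed.

Lemma lift_fracE' x : exists a b, b != 0 /\ x = a%:F / b%:F.
Proof. by exists (\n_(repr x)), (\d_(repr x)); split; [apply: denom_ratioP| apply: frac_repr2]. Qed.

Lemma aux_sub (F : fieldType) (a b c d : F) : b != 0 -> d != 0 ->
  a / b - c / d = (a * d - c * b) / (b * d).
Proof. by move=> b0 d0; field; rewrite b0 d0. Qed.
Lemma aux_mul (F : fieldType) (a b c d : F) : b != 0 -> d != 0 ->
  a / b * (c / d) = (a * c) / (b * d).
Proof. by move=> b0 d0; field; rewrite b0 d0. Qed.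

Lemma lift_fracB : zmod_morphism (lift_frac f).
Proof.
move=> x y.
have [a [b [b0 ->]]] := lift_fracE' x.
have [c [d [d0 ->]]] := lift_fracE' y.
have bd0 : b * d != 0 by rewrite mulf_neq0.
rewrite aux_sub ?tofrac_neq0 // -!tofracM -tofracB.
rewrite !lift_fracE // (rmorphB f) !(rmorphM f) aux_sub ?tofrac_neq0 ?f_neq0 //.
by rewrite -!tofracM -tofracB.
Qed.

Lemma lift_fracM : monoid_morphism (lift_frac f).
Proof.
split.
  have -> : (1 : Kf) = 1%:F / 1%:F by rewrite tofrac1 divr1.
  by rewrite lift_fracE ?oner_neq0 // rmorph1 tofrac1 divr1.
move=> x y.
have [a [b [b0 ->]]] := lift_fracE' x.
have [c [d [d0 ->]]] := lift_fracE' y.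
have bd0 : b * d != 0 by rewrite mulf_neq0.
rewrite aux_mul ?tofrac_neq0 // -!tofracM.
rewrite !lift_fracE // !(rmorphM f) aux_mul ?tofrac_neq0 ?f_neq0 //.
by rewrite -!tofracM.
Qed.

Lemma lift_frac_tofrac a : lift_frac f a%:F = (f a)%:F.
Proof.
have -> : a%:F = a%:F / 1%:F by rewrite tofrac1 divr1.
by rewrite lift_fracE ?oner_neq0 // rmorph1 tofrac1 divr1.
Qed.
End Lift.

Definition rM : {poly {poly rat}} := ('X : {poly rat})%:P * 'X.
Definition gm : {rmorphism {poly {poly rat}} -> {poly {poly rat}}} := comp_poly rM.
Definition smP : {rmorphism Pring -> Pring} := map_poly gm.
Definition rN : Pring := ((('X : {poly rat})%:P : {poly {poly rat}})%:P) * 'X.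
Definition snP : {rmorphism Pring -> Pring} := comp_poly rN.

Lemma size_rM : size rM = 2%N.
Proof. by rewrite /rM size_mulX ?polyC_eq0 ?polyX_eq0 // size_polyC polyX_eq0. Qed.
Lemma size_rN : size rN = 2%N.
Proof. by rewrite /rN size_mulX ?polyC_eq0 ?polyX_eq0 // size_polyC polyC_eq0 polyX_eq0. Qed.

Lemma gm_inj : injective gm.
Proof. apply: raddf_inj => x /eqP; rewrite /= comp_poly2_eq0 ?size_rM //; by move/eqP. Qed.
Lemma smP_inj : injective smP.
Proof. apply: map_inj_poly; [exact: gm_inj | exact: rmorph0]. Qed.
Lemma snP_inj : injective snP.
Proof. apply: raddf_inj => x /eqP; rewrite /= comp_poly2_eq0 ?size_rN //; by move/eqP. Qed.

HB.instance Definition _ := GRing.isZmodMorphism.Build Kf Kf sigma_m (lift_fracB smP_inj).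
HB.instance Definition _ := GRing.isMonoidMorphism.Build Kf Kf sigma_m (lift_fracM smP_inj).
HB.instance Definition _ := GRing.isZmodMorphism.Build Kf Kf sigma_n (lift_fracB snP_inj).
HB.instance Definition _ := GRing.isMonoidMorphism.Build Kf Kf sigma_n (lift_fracM snP_inj).

Lemma sigma_m_s : sigma_m s_ = s_.
Proof. rewrite /sigma_m /s_ (lift_frac_tofrac smP_inj) /= /sP map_polyC /= comp_polyC //. Qed.
Lemma sigma_m_Qm : sigma_m Qm = s_ * Qm.
Proof. rewrite /sigma_m /Qm (lift_frac_tofrac smP_inj) /= /QmP map_polyC /= comp_polyX /rM.
by rewrite -tofracM /sP /QmP -polyCM. Qed.
Lemma sigma_m_Qn : sigma_m Qn = Qn.
Proof. by rewrite /sigma_m /Qn (lift_frac_tofrac smP_inj) /= /QnP map_polyX. Qed.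
Lemma sigma_n_s : sigma_n s_ = s_.
Proof. by rewrite /sigma_n /s_ (lift_frac_tofrac snP_inj) /= /sP comp_polyC. Qed.
Lemma sigma_n_Qm : sigma_n Qm = Qm.
Proof. by rewrite /sigma_n /Qm (lift_frac_tofrac snP_inj) /= /QmP comp_polyC. Qed.
Lemma sigma_n_Qn : sigma_n Qn = s_ * Qn.
Proof. by rewrite /sigma_n /Qn (lift_frac_tofrac snP_inj) /= /QnP comp_polyX /rN -tofracM. Qed.

Lemma shift_zmod j i : zmod_morphism (shift j i).
Proof.
move=> x y; rewrite /shift; elim: j => [|j IH] /=.
  elim: i => [|i IH] //=; by rewrite IH rmorphB.
by rewrite IH rmorphB.
Qed.
Lemma shift_monoid j i : monoid_morphism (shift j i).
Proof.
rewrite /shift; split.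
  elim: j => [|j IH] /=; last by rewrite IH rmorph1.
  elim: i => [|i IH] //=; by rewrite IH rmorph1.
move=> x y; elim: j => [|j IH] /=.
  elim: i => [|i IH] //=; by rewrite IH rmorphM.
by rewrite IH rmorphM.
Qed.
HB.instance Definition _ j i := GRing.isZmodMorphism.Build Kf Kf (shift j i) (shift_zmod j i).
HB.instance Definition _ j i := GRing.isMonoidMorphism.Build Kf Kf (shift j i) (shift_monoid j i).

Lemma iter_sm_s j : iter j sigma_m s_ = s_.
Proof. by elim: j => //= j ->; rewrite sigma_m_s. Qed.
Lemma iter_sn_s j : iter j sigma_n s_ = s_.
Proof. by elim: j => //= j ->; rewrite sigma_n_s. Qed.
Lemma shift_s j i : shift j i s_ = s_.
Proof. by rewrite /shift iter_sn_s iter_sm_s. Qed.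
Lemma shift_Qm j i : shift j i Qm = s_ ^+ j * Qm.
Proof.
rewrite /shift; have -> : iter i sigma_n Qm = Qm by elim: i => //= i ->; rewrite sigma_n_Qm.
elim: j => [|j IH] /=; first by rewrite mul1r.
by rewrite IH rmorphM rmorphXn /= sigma_m_s sigma_m_Qm exprSr mulrA.
Qed.
Lemma shift_Qn j i : shift j i Qn = s_ ^+ i * Qn.
Proof.
rewrite /shift; have -> : iter i sigma_n Qn = s_ ^+ i * Qn.
  elim: i => [|i IH] /=; first by rewrite mul1r.
  by rewrite IH rmorphM rmorphXn /= sigma_n_s sigma_n_Qn exprSr mulrA.
elim: j => [|j IH] //=.
by rewrite IH rmorphM rmorphXn /= sigma_m_s sigma_m_Qn.
Qed.

Lemma widen_zero (n m : nat) (G : nat -> Alg) : (n <= m)%N ->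
  (forall j, (n <= j)%N -> G j = 0) -> \sum_(j < n) G j = \sum_(j < m) G j.
Proof.
move=> nm H; rewrite (big_ord_widen m G nm) big_mkcond; apply: eq_bigr => j _.
by case: ifP => // /negbT; rewrite -leqNgt => /H ->.
Qed.

Definition term (p q : Alg) (i j : nat) : Alg :=
  (p`_i`_j)%:P%:P * map_poly (map_poly (shift j i)) q * ('X^j)%:P * 'X^i.

Lemma amul_bound (p q : Alg) (N M : nat) : (size p <= N)%N -> (forall i : nat, leq (size p`_i) M) ->
  amul p q = \sum_(i < N) \sum_(j < M) term p q i j.
Proof.
move=> HN HM; rewrite /amul.
rewrite (@widen_zero (size p) N (fun i => \sum_(j < size p`_i) term p q i j)) //; last first.
  by move=> i Hi; rewrite nth_default // size_poly0 big_ord0.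
apply: eq_bigr => i _; apply: widen_zero; first exact: HM.
by move=> j Hj; rewrite /term nth_default // !mul0r.
Qed.

Definition csz (p : Alg) (i : nat) : nat := size p`_i.
Definition msz (p : Alg) := \max_(i < size p) csz p i.
Lemma msz_ge (p : Alg) (i : nat) : leq (size p`_i) (msz p).
Proof.
case: (ltnP i (size p)) => Hi.
  exact: (@leq_bigmax_cond _ _ _ (Ordinal Hi)).
by rewrite nth_default // size_poly0.
Qed.

Lemma amulDl (p p' q : Alg) : amul (p + p') q = amul p q + amul p' q.
Proof.
set N := maxn (size p) (size p'); set M := maxn (msz p) (msz p').
have H1 : (size p <= N)%N by rewrite leq_maxl.
have H2 : (size p' <= N)%N by rewrite leq_maxr.
have H3 : leq (size (p + p')) N by apply: leq_trans (size_add _ _) _; rewrite geq_max H1 H2.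
have H4 i : leq (size p`_i) M by apply: leq_trans (msz_ge p i) _; rewrite leq_maxl.
have H5 i : leq (size p'`_i) M by apply: leq_trans (msz_ge p' i) _; rewrite leq_maxr.
have H6 i : leq (size (p + p')`_i) M.
  by rewrite coefD; apply: leq_trans (size_add _ _) _; rewrite geq_max H4 H5.
rewrite !(amul_bound q H1 H4) (amul_bound q H2 H5) (amul_bound q H3 H6) -big_split.
apply: eq_bigr => i _; rewrite -big_split; apply: eq_bigr => j _.
by rewrite /term !coefD !rmorphD /= !mulrDl.
Qed.

Lemma amulNl (p q : Alg) : amul (- p) q = - amul p q.
Proof.
have H1 : leq (size (- p)) (size p) by rewrite size_polyN.
have H4 i : leq (size p`_i) (msz p) by apply: msz_ge.
have H6 i : leq (size (- p)`_i) (msz p) by rewrite coefN size_polyN.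
rewrite (amul_bound q (leqnn _) H4) (amul_bound q H1 H6) -sumrN.
apply: eq_bigr => i _; rewrite -sumrN; apply: eq_bigr => j _.
by rewrite /term !coefN !rmorphN /= !mulNr.
Qed.

Lemma amulBl (p p' q : Alg) : amul (p - p') q = amul p q - amul p' q.
Proof. by rewrite amulDl amulNl. Qed.

Lemma amulDr (p q q' : Alg) : amul p (q + q') = amul p q + amul p q'.
Proof.
rewrite /amul -big_split; apply: eq_bigr => i _; rewrite -big_split; apply: eq_bigr => j _.
by rewrite rmorphD /= mulrDr !mulrDl.
Qed.

Lemma amulNr (p q : Alg) : amul p (- q) = - amul p q.
Proof.
rewrite /amul -sumrN; apply: eq_bigr => i _; rewrite -sumrN; apply: eq_bigr => j _.
by rewrite rmorphN /= !mulrN !mulNr.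
Qed.

Lemma amulBr (p q q' : Alg) : amul p (q - q') = amul p q - amul p q'.
Proof. by rewrite amulDr amulNr. Qed.

Definition Mon (a : Kf) (j i : nat) : Alg := locked ((a%:P * 'X^j)%:P * 'X^i).
Lemma MonE a j i : Mon a j i = (a%:P * 'X^j)%:P * 'X^i.
Proof. by rewrite /Mon -lock. Qed.

Lemma coef_Mon a j i k l :
  (Mon a j i)`_k`_l = if (k == i) && (l == j) then a else 0.
Proof.
rewrite MonE coefMXn; case: (ltnP k i) => Hk.
  rewrite coef0 (ltn_eqF Hk). done.
rewrite coefC.
have -> : (k - i == 0)%N = (k == i) by rewrite subn_eq0 eqn_leq Hk andbT.
case: (k == i); last first. rewrite coef0. done.
rewrite coefCM coefXn. case: (l == j). rewrite mulr1. done. rewrite mulr0. done.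
Qed.
Lemma coef_Mon_k a j i k l : k != i -> (Mon a j i)`_k`_l = 0.
Proof. by move/negbTE => H; rewrite coef_Mon H andFb. Qed.
Lemma coef_Mon_l a j i k l : l != j -> (Mon a j i)`_k`_l = 0.
Proof. by move/negbTE => H; rewrite coef_Mon H andbF. Qed.
Lemma coef_Mon_ij a j i : (Mon a j i)`_i`_j = a.
Proof. by rewrite coef_Mon !eqxx. Qed.

Lemma size_Mon a j i : leq (size (Mon a j i)) i.+1.
Proof. apply/leq_sizeP => k Hk; apply/polyP => l; by rewrite coef0 coef_Mon_k // gtn_eqF. Qed.
Lemma csize_Mon a j i k : leq (size (Mon a j i)`_k) j.+1.
Proof. by apply/leq_sizeP => l Hl; rewrite coef_Mon_l // gtn_eqF. Qed.

Lemma amul_Mon a j i q : amul (Mon a j i) q =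
   a%:P%:P * map_poly (map_poly (shift j i)) q * ('X^j)%:P * 'X^i.
Proof.
rewrite (amul_bound q (size_Mon a j i) (csize_Mon a j i)) big_ord_recr.
rewrite big1 => [|k _]; last first.
  apply: big1 => l _; rewrite /term coef_Mon_k; first by rewrite rmorph0 !mul0r.
  by rewrite (ltn_eqF (ltn_ord k)).
rewrite [in LHS]/= add0r big_ord_recr big1 => [|l _]; last first.
  rewrite /term coef_Mon_l; first by rewrite rmorph0 !mul0r.
  by rewrite (ltn_eqF (ltn_ord l)).
rewrite [in LHS]/= add0r /term coef_Mon_ij.
reflexivity. Qed.


Lemma Ti_M j i (p q : {poly Kf}) :
  map_poly (shift j i) (p * q) = map_poly (shift j i) p * map_poly (shift j i) q.
Proof. exact: rmorphM. Qed.
Lemma To_M j i (p q : Alg) : map_poly (map_poly (shift j i)) (p * q) =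
  map_poly (map_poly (shift j i)) p * map_poly (map_poly (shift j i)) q.
Proof. exact: rmorphM. Qed.
Lemma To_C j i (c : {poly Kf}) : map_poly (map_poly (shift j i)) c%:P = (map_poly (shift j i) c)%:P.
Proof. exact: map_polyC. Qed.
Lemma Ti_C j i (c : Kf) : map_poly (shift j i) c%:P = (shift j i c)%:P.
Proof. exact: map_polyC. Qed.
Lemma To_Xn j i n : map_poly (map_poly (shift j i)) ('X^n : Alg) = 'X^n.
Proof. exact: map_polyXn. Qed.
Lemma Ti_Xn j i n : map_poly (shift j i) ('X^n : {poly Kf}) = 'X^n.
Proof. exact: map_polyXn. Qed.

Lemma T_Mon j i b l k : map_poly (map_poly (shift j i)) (Mon b l k) = Mon (shift j i b) l k.
Proof. rewrite !MonE To_M To_C To_Xn Ti_M Ti_C Ti_Xn. reflexivity. Qed.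

Lemma ac5 (R : comRingType) (A B X1 X2 Y1 Y2 : R) :
  A * (B * X1 * Y1) * X2 * Y2 = A * B * (X2 * X1) * (Y2 * Y1).
Proof. by ring. Qed.

Lemma MonMon_gen (R : comNzRingType) (a b : R) j i l k :
  (a%:P%:P * ((b%:P * 'X^l)%:P * 'X^k) * ('X^j)%:P * 'X^i : {poly {poly R}})
  = ((a*b)%:P * 'X^(j+l))%:P * 'X^(i+k).
Proof.
rewrite !exprD polyCM !rmorphM /=.
ring.
Qed.

Lemma MonMon a j i b l k : amul (Mon a j i) (Mon b l k) = Mon (a * shift j i b) (j + l) (i + k).
Proof. rewrite amul_Mon T_Mon !MonE. exact: MonMon_gen. Qed.

Lemma cstM a : cst a = Mon a 0 0.
Proof. by rewrite MonE /cst !expr0 !mulr1. Qed.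
Lemma EmM : Em = Mon 1 1 0.
Proof. by rewrite MonE /Em expr0 expr1 mulr1 mul1r. Qed.
Lemma EnM : En = Mon 1 0 1.
Proof. by rewrite MonE /En expr0 expr1 mulr1 !rmorph1 mul1r. Qed.
Lemma oneM : (1 : Alg) = Mon 1 0 0.
Proof. by rewrite MonE expr0 expr0 mulr1 mulr1 !rmorph1. Qed.

Definition trip := (Kf * nat * nat)%type.
Definition MS (l : seq trip) : Alg := \sum_(t <- l) Mon t.1.1 t.1.2 t.2.
Definition tmul (t u : trip) : trip := (t.1.1 * shift t.1.2 t.2 u.1.1, (t.1.2 + u.1.2)%N, (t.2 + u.2)%N).
Definition tneg (t : trip) : trip := (- t.1.1, t.1.2, t.2).

Lemma amul0l (q : Alg) : amul 0 q = 0.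
Proof. by have := amulBl 0 0 q; rewrite !subrr. Qed.
Lemma amul0r (p : Alg) : amul p 0 = 0.
Proof. by have := amulBr p 0 0; rewrite !subrr. Qed.

Lemma amul_MSl l q : amul (MS l) q = \sum_(t <- l) amul (Mon t.1.1 t.1.2 t.2) q.
Proof.
rewrite /MS; elim: l => [|t l IH]; first by rewrite !big_nil amul0l.
by rewrite !big_cons amulDl IH.
Qed.
Lemma amul_MSr p l : amul p (MS l) = \sum_(t <- l) amul p (Mon t.1.1 t.1.2 t.2).
Proof.
rewrite /MS; elim: l => [|t l IH]; first by rewrite !big_nil amul0r.
by rewrite !big_cons amulDr IH.
Qed.

Lemma big_pairs (F : trip -> Alg) (f : trip -> trip -> trip) l1 l2 :
  \sum_(t <- [seq f x y | x <- l1, y <- l2]) F t = \sum_(x <- l1) \sum_(y <- l2) F (f x y).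
Proof.
elim: l1 => [|x l1 IH]; first by rewrite !big_nil.
by rewrite /= big_cat big_map IH big_cons.
Qed.

Lemma amul_MS l1 l2 : amul (MS l1) (MS l2) = MS [seq tmul t u | t <- l1, u <- l2].
Proof.
rewrite amul_MSl /MS big_pairs; apply: eq_bigr => t _.
rewrite -/(MS l2) amul_MSr; apply: eq_bigr => u _.
by rewrite MonMon.
Qed.

Lemma MonN a j i : Mon (- a) j i = - Mon a j i.
Proof. by rewrite !MonE polyCN mulNr polyCN mulNr. Qed.

Lemma MS_sub l1 l2 : MS l1 - MS l2 = MS (l1 ++ map tneg l2).
Proof.
rewrite /MS big_cat big_map -sumrN; congr (_ + _); apply: eq_bigr => t _.
by rewrite MonN.
Qed.

Lemma MS1 a j i : MS [:: (a, j, i)] = Mon a j i.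
Proof. by rewrite /MS big_seq1. Qed.

Definition cf (k m : nat) (t : trip) : Kf := if eqn k t.2 && eqn m t.1.2 then t.1.1 else 0.
Definition coefL (l : seq trip) k m : Kf := foldr (fun t acc => cf k m t + acc) 0 l.

Lemma coef_MS l k m : (MS l)`_k`_m = coefL l k m.
Proof.
rewrite /MS; elim: l => [|t l IH]; first by rewrite big_nil !coef0.
by rewrite big_cons coefD coefD IH coef_Mon.
Qed.

Lemma MS_eq l1 l2 : (forall k m, coefL l1 k m = coefL l2 k m) -> MS l1 = MS l2.
Proof.
move=> H; apply/polyP => k; apply/polyP => m; by rewrite !coef_MS.
Qed.

Inductive ex : Type :=
 | Es | Exm | Exn | E1 | E0
 | Eadd of ex & ex | Emul of ex & ex | Eopp of ex | Einv of ex | Eexp of ex & nat.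

Fixpoint evalG (F : fieldType) (s x y : F) (e : ex) : F :=
  match e with
  | Es => s | Exm => x | Exn => y | E1 => 1 | E0 => 0
  | Eadd a b => evalG s x y a + evalG s x y b
  | Emul a b => evalG s x y a * evalG s x y b
  | Eopp a => - evalG s x y a
  | Einv a => (evalG s x y a)^-1
  | Eexp a n => evalG s x y a ^+ n
  end.

Fixpoint shE (j i : nat) (e : ex) : ex :=
  match e with
  | Es => Es | Exm => Emul (Eexp Es j) Exm | Exn => Emul (Eexp Es i) Exn
  | E1 => E1 | E0 => E0
  | Eadd a b => Eadd (shE j i a) (shE j i b)
  | Emul a b => Emul (shE j i a) (shE j i b)
  | Eopp a => Eopp (shE j i a)
  | Einv a => Einv (shE j i a)
  | Eexp a n => Eexp (shE j i a) n
  end.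

Definition ev (e : ex) : Kf := evalG s_ Qm Qn e.

Lemma ev_add a b : ev (Eadd a b) = ev a + ev b. Proof. reflexivity. Qed.
Lemma ev_mul a b : ev (Emul a b) = ev a * ev b. Proof. reflexivity. Qed.
Lemma ev_opp a : ev (Eopp a) = - ev a. Proof. reflexivity. Qed.
Lemma ev_inv a : ev (Einv a) = (ev a)^-1. Proof. reflexivity. Qed.
Lemma ev_exp a n : ev (Eexp a n) = ev a ^+ n. Proof. reflexivity. Qed.
Lemma ev_1 : ev E1 = 1. Proof. reflexivity. Qed.
Lemma ev_0 : ev E0 = 0. Proof. reflexivity. Qed.
Lemma ev_s : ev Es = s_. Proof. reflexivity. Qed.
Lemma ev_m : ev Exm = Qm. Proof. reflexivity. Qed.
Lemma ev_n : ev Exn = Qn. Proof. reflexivity. Qed.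

Lemma shM j i (x y : Kf) : shift j i (x * y) = shift j i x * shift j i y.
Proof. exact: rmorphM. Qed.
Lemma shD j i (x y : Kf) : shift j i (x + y) = shift j i x + shift j i y.
Proof. exact: rmorphD. Qed.
Lemma shN j i (x : Kf) : shift j i (- x) = - shift j i x.
Proof. exact: rmorphN. Qed.
Lemma shV j i (x : Kf) : shift j i (x^-1) = (shift j i x)^-1.
Proof. exact: fmorphV. Qed.
Lemma shX j i (x : Kf) n : shift j i (x ^+ n) = (shift j i x) ^+ n.
Proof. exact: rmorphXn. Qed.
Lemma sh1 j i : shift j i 1 = 1.
Proof. exact: rmorph1. Qed.
Lemma sh0 j i : shift j i 0 = 0.
Proof. exact: rmorph0. Qed.

Lemma shift_ev j i e : shift j i (ev e) = ev (shE j i e).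
Proof.
elim: e => [|||||a IHa b IHb|a IHa b IHb|a IHa|a IHa|a IHa n].
- by rewrite ev_s shift_s.
- by rewrite ev_m shift_Qm.
- by rewrite ev_n shift_Qn.
- by rewrite ev_1 sh1.
- by rewrite ev_0 sh0.
- by rewrite [shE _ _ _]/= !ev_add shD IHa IHb.
- by rewrite [shE _ _ _]/= !ev_mul shM IHa IHb.
- by rewrite [shE _ _ _]/= !ev_opp shN IHa.
- by rewrite [shE _ _ _]/= !ev_inv shV IHa.
- by rewrite [shE _ _ _]/= !ev_exp shX IHa.
Qed.

Definition tripE := (ex * nat * nat)%type.
Definition evT (t : tripE) : trip := (ev t.1.1, t.1.2, t.2).
Definition MSE (l : seq tripE) : Alg := MS (map evT l).
Definition tmulE (t u : tripE) : tripE :=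
  (Emul t.1.1 (shE t.1.2 t.2 u.1.1), (t.1.2 + u.1.2)%N, (t.2 + u.2)%N).
Definition tnegE (t : tripE) : tripE := (Eopp t.1.1, t.1.2, t.2).

Lemma map_pairs l1 l2 :
  [seq tmul t u | t <- map evT l1, u <- map evT l2] = map evT [seq tmulE t u | t <- l1, u <- l2].
Proof.
elim: l1 => [|t l1 IH] //=.
rewrite map_cat IH; congr (_ ++ _).
rewrite -!map_comp; apply: eq_map => u.
by rewrite /= /tmul /tmulE /evT /= ev_mul shift_ev.
Qed.

Lemma amul_MSE l1 l2 : amul (MSE l1) (MSE l2) = MSE [seq tmulE t u | t <- l1, u <- l2].
Proof. by rewrite /MSE amul_MS map_pairs. Qed.

Lemma MSE_sub l1 l2 : MSE l1 - MSE l2 = MSE (l1 ++ map tnegE l2).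
Proof.
by rewrite /MSE MS_sub map_cat -!map_comp.

Qed.

Definition ecoef (l : seq tripE) (k m : nat) : ex :=
  foldr (fun t acc => Eadd (if eqn k t.2 && eqn m t.1.2 then t.1.1 else E0) acc) E0 l.

Lemma coefL_ev l k m : coefL (map evT l) k m = ev (ecoef l k m).
Proof.
elim: l => [|t l IH] //=.
rewrite ev_add -IH /cf /evT /=.
by case: ifP.
Qed.

Lemma MSE_eq l1 l2 : (forall k m, ev (ecoef l1 k m) = ev (ecoef l2 k m)) -> MSE l1 = MSE l2.
Proof. move=> H; apply: MS_eq => k m; by rewrite !coefL_ev. Qed.

Lemma cstE e : cst (ev e) = MSE [:: (e, 0%N, 0%N)].
Proof. by rewrite /MSE /= MS1 cstM. Qed.
Lemma EmE : Em = MSE [:: (E1, 1%N, 0%N)].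
Proof. by rewrite /MSE /= MS1 EmM. Qed.
Lemma EnE : En = MSE [:: (E1, 0%N, 1%N)].
Proof. by rewrite /MSE /= MS1 EnM. Qed.
Lemma oneE : (1 : Alg) = MSE [:: (E1, 0%N, 0%N)].
Proof. by rewrite /MSE /= MS1 oneM. Qed.

Lemma Phi_frac k (q : Pring) : Phi k (tofracP q) = tofracP (1 - sP ^+ k * q ^+ 4).
Proof. rewrite /Phi /s_ tofracB tofrac1 tofracM !tofracXn. reflexivity. Qed.

Lemma L1 (R : comNzRingType) (a b : {poly R}) k :
  (1 - a ^+ k * b ^+ 4).[0] = 1 - a.[0] ^+ k * b.[0] ^+ 4.
Proof. by rewrite hornerD hornerN hornerM !horner_exp -polyC1 hornerC. Qed.

Lemma nz_gen (R : comNzRingType) (a b : {poly {poly {poly R}}}) k :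
  (0 < k)%N -> a.[0].[0].[0] = 0 -> 1 - a ^+ k * b ^+ 4 != 0.
Proof.
move=> k0 ha; apply/negP => /eqP H.
have := congr1 (fun p : {poly {poly {poly R}}} => p.[0].[0].[0]) H.
rewrite L1 L1 L1 ha expr0n (gtn_eqF k0) mul0r subr0.
rewrite horner0 horner0 horner0 => /eqP.
by rewrite oner_eq0.
Qed.

Lemma sP0 : sP.[0].[0].[0] = 0.
Proof. rewrite /sP hornerC. rewrite hornerC. rewrite hornerX. reflexivity. Qed.

Lemma Phi_nz k (q : Pring) : (0 < k)%N -> Phi k (tofracP q) != 0.
Proof.
move=> k0. rewrite Phi_frac. rewrite tofrac_eq0. exact: nz_gen k0 sP0.
Qed.

Definition ePhi (k : nat) (q : ex) : ex := Eadd E1 (Eopp (Emul (Eexp Es k) (Eexp q 4))).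
Definition ec0 : ex := Emul (Eexp Es 2) (Eadd (Eexp Exm 2) (Eexp Exn 2)).
Definition ec1 : ex := Eopp (Eadd E1 (Emul (Emul (Eexp Es 4) (Eexp Exm 2)) (Eexp Exn 2))).
Definition CC : Alg := MSE
  [:: (Emul ec0 (Einv (Emul (ePhi 2 Exm) (ePhi 2 Exn))), 0, 0);
      (Emul ec1 (Einv (Emul (ePhi 2 Exm) (ePhi 6 Exn))), 0, 1);
      (Emul ec1 (Einv (Emul (ePhi 6 Exm) (ePhi 2 Exn))), 1, 0);
      (Emul ec0 (Einv (Emul (ePhi 6 Exm) (ePhi 6 Exn))), 1, 1)]%N.

Lemma main_expand :
  Phi 2 Qm != 0 -> Phi 6 Qm != 0 -> Phi 2 Qn != 0 -> Phi 6 Qn != 0 ->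
  A2 = amul CC Atilde.
Proof.
move=> h1 h2 h3 h4.
rewrite /A2 /Atilde /u1 /v1 /Phi.
rewrite -[s_]/(ev Es) -[Qm]/(ev Exm) -[Qn]/(ev Exn) -[1 : Kf]/(ev E1).
rewrite -!(ev_mul, ev_add, ev_opp, ev_inv, ev_exp).
rewrite !cstE EmE EnE oneE.
rewrite !(amul_MSE, MSE_sub).
apply: MSE_eq => k m. 
lazymatch goal with |- ev (ecoef ?X k m) = ev (ecoef ?Y k m) =>
  have gen : forall (F : fieldType) (s x y : F),
    1 - s ^+ 2 * x ^+ 4 != 0 -> 1 - s ^+ 6 * x ^+ 4 != 0 ->
    1 - s ^+ 2 * y ^+ 4 != 0 -> 1 - s ^+ 6 * y ^+ 4 != 0 ->
    forall k m, evalG s x y (ecoef X k m) = evalG s x y (ecoef Y k m)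
end.
{ move=> F s x y g1 g2 g3 g4 k' m'.
  case: k' => [|[|[|k']]]; case: m' => [|[|[|m']]].
  all: cbv beta iota delta [ecoef foldr flatten map cat tmulE tnegE shE evalG eqn andb addn addn_rec Nat.add fst snd ec0 ec1 ePhi].
  all: field.
  all: by rewrite ?g1 ?g2 ?g3 ?g4. }
exact: (gen Kf s_ Qm Qn h1 h2 h3 h4 k m).
Qed.


Theorem lemma4p4 : exists C : Alg, A2 = amul C Atilde.
Proof.
exists CC.
apply: main_expand; apply: Phi_nz; by [].
Qed.
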